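(* Let $\mathcal{G}=(V,\mathit{Act},\mathcal{R})$ be a normed BPA system. For all $\alpha,\beta,\gamma\in V^*$: $\alpha\gamma\sim\beta\gamma$ if and only if $\alpha\sim_{R_\gamma}\beta$.
   Context: A BPA system $\mathcal{G}=(V,\mathit{Act},\mathcal{R})$: finite variables $V$, finite actions $\mathit{Act}$ (possibly containing the silent action $\tau$), rules $A\xrightarrow{a}\alpha$ ($A\in V,\alpha\in V^*$). LTS $\mathcal{L}_\mathcal{G}$: states $V^*$, transitions $A\beta\xrightarrow{a}\alpha\beta$ for rules $A\xrightarrow{a}\alpha$, $\beta\in V^*$. $\mathcal{G}$ is normed if every variable can reach $\varepsilon$ by a sequence of transitions. Branching bisimilarity $\sim$ on an LTS: the largest relation $\mathcal{B}$ such that for $(s,t)\in\mathcal{B}$ each move $s\xrightarrow{a}s'$ is matched either by $a=\tau$ and $(s',t)\in\mathcal{B}$, or by a path $t=t_0\xrightarrow{\tau}\cdots\xrightarrow{\tau}t_k\xrightarrow{a}t'$ with $(s',t')\in\mathcal{B}$, $(s,t_i)\in\mathcal{B}$ for $i\in[1,k]$; and symmetrically. $\sim$ without subscript refers to $\mathcal{L}_\mathcal{G}$. For $\gamma\in V^*$, $R_\gamma=\{X\in V\mid X\gamma\sim\gamma\}$. For $R\subseteq V$, the LTS $\mathcal{L}_{\mathcal{G},R}$ is obtained from $\mathcal{L}_\mathcal{G}$ by removing all outgoing transitions of every state $\alpha\in R^*$; $\alpha\sim_R\beta$ means $\alpha$ and $\beta$ are branching bisimilar in $\mathcal{L}_{\mathcal{G},R}$.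 *)

(* Defs.v *)
From mathcomp Require Import all_boot.
From Stdlib Require Import Relations.
Set Implicit Arguments. Unset Strict Implicit. Unset Printing Implicit Defensive.

(** A BPA system: finite set of variables [V], finite set of actions [Act]
    with a designated silent action [tau], and a finite list of rules
    [(A, a, alpha)] standing for [A --a--> alpha]. *)
Record BPA := mkBPA {
  bpa_V : finType;
  bpa_Act : finType;
  bpa_tau : bpa_Act;
  bpa_rules : seq (bpa_V * bpa_Act * seq bpa_V)
}.

Definition bpa_step (G : BPA) (s : seq (bpa_V G)) (a : bpa_Act G)
    (t : seq (bpa_V G)) : Prop :=
  exists (A : bpa_V G) (alpha beta : seq (bpa_V G)),
    s = A :: beta /\ (A, a, alpha) \in bpa_rules G /\ t = alpha ++ beta.

(** L_{G,R}: remove all outgoing transitions of states in R^*. *)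
Definition in_star (G : BPA) (R : bpa_V G -> Prop) (s : seq (bpa_V G)) : Prop :=
  forall X, X \in s -> R X.

Definition bpa_step_R (G : BPA) (R : bpa_V G -> Prop) (s : seq (bpa_V G))
    (a : bpa_Act G) (t : seq (bpa_V G)) : Prop :=
  ~ in_star R s /\ bpa_step s a t.

Definition normed (G : BPA) : Prop :=
  forall A : bpa_V G,
    clos_refl_trans _ (fun s t => exists a, bpa_step s a t) [:: A] [::].

Section Branching.
Variables (S L : Type) (tau : L) (T : S -> L -> S -> Prop).

(** [tau_path B s t u]: a path t = t_0 -tau-> ... -tau-> t_k = u with
    B s t_i for all i in [1,k]. *)
Inductive tau_path (B : S -> S -> Prop) (s : S) : S -> S -> Prop :=
| tau_path_nil t : tau_path B s t t
| tau_path_cons t t' u : T t tau t' -> B s t' -> tau_path B s t' u ->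
    tau_path B s t u.

Definition bb_transfer (B : S -> S -> Prop) : Prop :=
  forall s t, B s t -> forall a s', T s a s' ->
    (a = tau /\ B s' t) \/
    (exists tk t', tau_path B s t tk /\ T tk a t' /\ B s' t').

Definition branching_bisimulation (B : S -> S -> Prop) : Prop :=
  bb_transfer B /\ bb_transfer (fun s t => B t s).

Definition branching_bisimilar (s t : S) : Prop :=
  exists B, branching_bisimulation B /\ B s t.
End Branching.

Definition bisim (G : BPA) (s t : seq (bpa_V G)) : Prop :=
  branching_bisimilar (bpa_tau G) (@bpa_step G) s t.

Definition bisim_R (G : BPA) (R : bpa_V G -> Prop) (s t : seq (bpa_V G)) : Prop :=
  branching_bisimilar (bpa_tau G) (@bpa_step_R G R) s t.

Definition R_of (G : BPA) (gamma : seq (bpa_V G)) : bpa_V G -> Prop :=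
  fun X => bisim (X :: gamma) gamma.

(* Main.v *)
Require Import Defs.
From mathcomp Require Import all_boot zify.
From Stdlib Require Import Classical Relations.
Set Implicit Arguments. Unset Strict Implicit.
Section Gen.
Variables (S L : Type) (tau : L) (T : S -> L -> S -> Prop).
Local Notation tp := (tau_path tau T).
Local Notation bb := (branching_bisimilar tau T).

Definition tr1 (B : S -> S -> Prop) (s t : S) :=
  forall a s', T s a s' -> (a = tau /\ B s' t) \/
    (exists tk t', tp B s t tk /\ T tk a t' /\ B s' t').

Lemma tp_mono (C D : S -> S -> Prop) s s' t u :
  (forall y, C s y -> D s' y) -> tp C s t u -> tp D s' t u.
Proof.
move=> H; elim=> [t0|t0 t1 u0 Ht Hc _ IH]; first by constructor.
by apply: tau_path_cons Ht (H _ Hc) IH.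
Qed.

Lemma tp_app C s t u v : tp C s t u -> tp C s u v -> tp C s t v.
Proof.
elim=> [//|t0 t1 u0 Ht Hc _ IH] H.
by apply: tau_path_cons Ht Hc (IH H).
Qed.

Lemma tp_last C s t u : tp C s t u -> u = t \/ C s u.
Proof.
elim=> [t0|t0 t1 u0 Ht Hc _ [->|IH]]; by [left|right].
Qed.

Lemma tp_unsnoc C s t u : tp C s t u ->
  u = t \/ exists u0, tp C s t u0 /\ T u0 tau u /\ C s u.
Proof.
elim=> [t0|t0 t1 u0 Ht Hc Hp [E|[u1 [H1 [H2 H3]]]]]; first by left.
- subst; right; exists t0; split; [constructor|by split].
- right; exists u1; split; [exact: tau_path_cons Ht Hc H1|by split].
Qed.

Lemma tr1_mono B C s t : (forall x y, B x y -> C x y) -> tr1 B s t -> tr1 C s t.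
Proof.
move=> H Htr a s' Hs; case: (Htr a s' Hs) => [[E HB]|[tk [t' [Hp [Ht HB]]]]].
  by left; split; [|apply: H].
right; exists tk, t'; split; [|split; [done|exact: H]].
by apply: tp_mono Hp => y; apply: H.
Qed.

Lemma bb_sym s t : bb s t -> bb t s.
Proof. by move=> [B [[H1 H2] Hst]]; exists (fun x y => B y x); split. Qed.

Lemma bb_tr s t : bb s t -> tr1 bb s t.
Proof.
move=> [B [[H1 H2] Hst]]; apply: (tr1_mono (B:=B)); last exact: H1.
by move=> x y Hxy; exists B; split.
Qed.

Lemma bb_tr_r (B : S -> S -> Prop) s t : bb s t -> tr1 (fun a b => B a b \/ bb a b) s t.
Proof. move=> H; apply: tr1_mono (bb_tr H) => ? ? ?; by right. Qed.

Lemma bb_refl s : bb s s.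
Proof.
exists (fun x y => x = y); split=> //; split=> x y E a s' Hs; subst; right;
  eexists; exists s'; (split; [constructor|by split]).
Qed.

Definition comp (B1 B2 : S -> S -> Prop) x z := exists y, B1 x y /\ B2 y z.

Lemma comp_tr B1 B2 : bb_transfer tau T B1 -> bb_transfer tau T B2 ->
  bb_transfer tau T (comp B1 B2).
Proof.
move=> H1 H2 s t [u [Hsu Hut]] a s' Hs.
case: (H1 _ _ Hsu a s' Hs) => [[E Hs'u]|[uk [u' [Hp [Hu Hs'u']]]]].
  by left; split=> //; exists u.
have M : forall x y, tp B1 s x y -> forall z, B1 s x -> B2 x z ->
   exists z', tp (comp B1 B2) s z z' /\ B2 y z'.
  move=> x y; elim=> [x0 z _ Hz|x0 x1 y0 Hx Hc _ IH z Hsx Hz].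
    by exists z; split=> //; constructor.
  case: (H2 _ _ Hz _ _ Hx) => [[_ Hz']|[zk [z1 [Hp1 [Hz1 Hb]]]]]; first exact: IH.
  have [z' [Hp2 Hb2]] := IH _ Hc Hb.
  exists z'; split=> //; apply: tp_app.
    by apply: tp_mono Hp1 => w Hw; exists x0.
  by apply: tau_path_cons Hz1 _ Hp2; exists x1.
have [tk [Hpt Hukt]] := M _ _ Hp _ Hsu Hut.
have Hsuk : B1 s uk by case: (tp_last Hp) => [->|].
case: (H2 _ _ Hukt _ _ Hu) => [[E Hb]|[zk [z' [Hp1 [Hz Hb]]]]].
  subst a; case: (tp_unsnoc Hpt) => [E|[u0 [Hp0 [Ht0 _]]]].
    by subst; left; split=> //; exists u'.
  by right; exists u0, tk; split=> //; split=> //; exists u'.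
right; exists zk, z'; split; last by split=> //; exists u'.
apply: tp_app Hpt _; by apply: tp_mono Hp1 => w Hw; exists uk.
Qed.

Lemma bb_trans s u t : bb s u -> bb u t -> bb s t.
Proof.
move=> [B1 [[H1 H1'] Hsu]] [B2 [[H2 H2'] Hut]].
exists (comp B1 B2); split; last by exists u.
split; first exact: comp_tr.
have := comp_tr H2' H1' => H x y [z [Hyz Hzx]] a x' Hx.
case: (H x y _ a x' Hx) => [|[E Hb]|[tk [t' [Hp [Ht Hb]]]]]; first by exists z.
- left; split=> //; case: Hb => w [? ?]; by exists w.
- right; exists tk, t'; split; last by split=> //; case: Hb => w [? ?]; exists w.
  by apply: tp_mono Hp => w [v [? ?]]; exists v.
Qed.

Lemma upto (B : S -> S -> Prop) : (forall x y, B x y -> B y x) ->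
  (forall x y, B x y -> tr1 (fun a b => B a b \/ bb a b) x y) ->
  forall x y, B x y -> bb x y.
Proof.
move=> Hsym Htr x y Hxy.
have Hsym' : forall a b, (B a b \/ bb a b) -> (B b a \/ bb b a).
  by move=> a b [H|H]; [left; apply: Hsym|right; apply: bb_sym].
have T1 : bb_transfer tau T (fun a b => B a b \/ bb a b).
  move=> a b [H|H]; first exact: Htr.
  by apply: tr1_mono (bb_tr H) => ? ? ?; right.
exists (fun a b => B a b \/ bb a b); split; last by left.
split=> // a b Hab; apply: tr1_mono (T1 _ _ (Hsym' _ _ Hab)) => ? ?; exact: Hsym'.
Qed.

Lemma sim (D C : S -> S -> Prop) z x :
  (forall w r, D z r -> bb r w -> C x w) ->
  forall p q, tp D z p q -> forall y, bb p y -> (forall w, bb p w -> C x w) ->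
  exists y', tp C x y y' /\ bb q y'.
Proof.
move=> HD p q; elim=> [p0 y Hy _|p0 p1 q0 Hst Hd _ IH y Hy Hw].
  by exists y; split=> //; constructor.
case: (bb_tr Hy Hst) => [[_ H]|[tk [t' [Hp [Ht Hb]]]]].
  by apply: IH H _ => w; apply: HD.
have [y' [Hp' Hb']] := IH _ Hb (fun w => HD w p1 Hd).
exists y'; split=> //; apply: tp_app.
  by apply: tp_mono Hp => w; apply: Hw.
by apply: tau_path_cons Ht (HD _ _ Hd Hb) Hp'.
Qed.

Inductive treach : S -> S -> Prop :=
| tr_refl s : treach s s
| tr_step s s1 t : T s tau s1 -> treach s1 t -> treach s t.

Lemma treach_trans s u t : treach s u -> treach u t -> treach s t.
Proof. by elim=> // s0 s1 u0 H _ IH /IH; apply: tr_step. Qed.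

Lemma treach_tp a b z : treach a b ->
  tp (fun _ r => treach a r /\ treach r b) z a b.
Proof.
elim=> [s|s s1 t H Hr IH]; first by constructor.
eapply tau_path_cons; first exact H.
  by split=> //; apply: (tr_step H) (tr_refl _).
by apply: tp_mono IH => y [H1 H2]; split=> //; apply: (tr_step H) H1.
Qed.

Lemma stutter s t u : bb s t -> treach s u -> treach u t -> bb u t.
Proof.
move=> Hst Hsu Hut.
have Hs_t := treach_trans Hsu Hut.
pose P r := treach s r /\ treach r t.
pose B x y := exists p q, P p /\ P q /\ bb x p /\ bb y q.
have Hsym : forall x y, B x y -> B y x.
  by move=> x y [p [q [? [? [? ?]]]]]; exists q, p.
apply: (@upto B Hsym); last first.
  by exists u, t; split; [|split; [split=> //; constructor|split; apply: bb_refl]].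
move=> x y [p [q [[Hsp Hpt] [[Hsq Hqt] [Hxp Hyq]]]]] a x' Hx.
pose C := fun a b => B a b \/ bb a b.
case: (bb_tr Hxp Hx) => [[E Hx'p]|[v [v' [Hpv [Hv Hx'v']]]]].
  by left; split=> //; left; exists p, q.
have [y1 [Y1 H1]] : exists y', tp C x y y' /\ bb t y'.
  apply: (@sim (fun _ r => treach q r /\ treach r t) C x x _ q t (treach_tp x Hqt) y (bb_sym Hyq)).
    move=> w r [Hqr Hrt] Hrw; left; exists p, r; split; first by split.
    split; first by split=> //; apply: treach_trans Hsq Hqr.
    by split=> //; apply: bb_sym.
  move=> w Hw; left; exists p, q; split; first by split.
  by split; [split|split=> //; apply: bb_sym].
have [y2 [Y2 H2]] : exists y', tp C x y1 y' /\ bb p y'.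
  apply: (@sim (fun _ r => treach s r /\ treach r p) C x x _ s p (treach_tp x Hsp) y1 (bb_trans Hst H1)).
    move=> w r [Hsr Hrp] Hrw; left; exists p, r; split; first by split.
    split; first by split=> //; apply: treach_trans Hrp Hpt.
    by split=> //; apply: bb_sym.
  move=> w Hw; left; exists p, s; split; first by split.
  split; first by split=> //; constructor.
  by split=> //; apply: bb_sym.
have [y3 [Y3 H3]] : exists y', tp C x y2 y' /\ bb v y'.
  apply: (@sim bb C x x _ p v Hpv y2 H2).
    by move=> w r Hxr Hrw; right; apply: bb_trans Hxr Hrw.
  by move=> w Hw; right; apply: bb_trans Hxp Hw.
have Y : tp C x y y3 := tp_app Y1 (tp_app Y2 Y3).
have Hxv : bb x v by case: (tp_last Hpv) => [->|].
case: (bb_tr H3 Hv) => [[E Hb]|[z0 [z' [Hp0 [Hz Hb]]]]].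
  subst a; case: (tp_unsnoc Y) => [E|[u0 [Hp0 [Ht0 _]]]].
    by subst; left; split=> //; right; apply: bb_trans Hx'v' Hb.
  by right; exists u0, y3; split=> //; split=> //; right; apply: bb_trans Hx'v' Hb.
right; exists z0, z'; split; last by split=> //; right; apply: bb_trans Hx'v' Hb.
by apply: tp_app Y _; apply: tp_mono Hp0 => w Hw; right; apply: bb_trans Hxv Hw.
Qed.
End Gen.
Lemma tp_map (S S' L : Type) (tau : L) (T : S -> L -> S -> Prop) (T' : S' -> L -> S' -> Prop)
  (f : S -> S') (C : S -> S -> Prop) (D : S' -> S' -> Prop) s s' t u :
  (forall x y, T x tau y -> T' (f x) tau (f y)) -> (forall y, C s y -> D s' (f y)) ->
  tau_path tau T C s t u -> tau_path tau T' D s' (f t) (f u).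
Proof.
move=> HT HC; elim=> [t0|t0 t1 u0 Ht Hc _ IH]; first by constructor.
exact: tau_path_cons (HT _ _ Ht) (HC _ Hc) IH.
Qed.

Section BPAsec.
Variable G : BPA.
Local Notation V := (bpa_V G).
Local Notation tau := (bpa_tau G).
Local Notation step := (@bpa_step G).
Local Notation bis := (@bisim G).

Lemma step_cat (r s : seq V) a t : r <> [::] -> step (r ++ s) a t ->
  exists r', step r a r' /\ t = r' ++ s.
Proof.
case: r => [//|A r0] _ [B [al [be [Hs [Hr Ht]]]]].
case: Hs => E1 E2; subst.
by exists (al ++ r0); split; [exists B, al, r0|rewrite catA].
Qed.

Lemma step_catr (r r' s : seq V) a : step r a r' -> step (r ++ s) a (r' ++ s).
Proof.
move=> [A [al [be [-> [Hr ->]]]]].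
by exists A, al, (be ++ s); split=> //; split=> //; rewrite catA.
Qed.

Lemma no_step_nil a (t : seq V) : ~ step [::] a t.
Proof. by move=> [A [al [be [E _]]]]. Qed.

Lemma in_star_nil (R : V -> Prop) : in_star R [::].
Proof. by move=> X. Qed.

Lemma not_star_nil (R : V -> Prop) (r : seq V) : ~ in_star R r -> r <> [::].
Proof. by move=> H E; apply: H; rewrite E; apply: in_star_nil. Qed.

Inductive wpath : seq V -> seq V -> nat -> Prop :=
| wp_nil s : wpath s s 0
| wp_cons s a s1 t n : step s a s1 -> wpath s1 t n -> wpath s t ((a != tau) + n).

Lemma wp_app s u t n m : wpath s u n -> wpath u t m -> wpath s t (n + m).
Proof.
elim=> // s0 a s1 u0 n0 H _ IH /IH Hp; rewrite -addnA; exact: wp_cons H Hp.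
Qed.

Lemma wp_catr r r' s n : wpath r r' n -> wpath (r ++ s) (r' ++ s) n.
Proof.
elim=> [s0|s0 a s1 t n0 H _ IH]; first exact: wp_nil.
exact: wp_cons (step_catr _ H) IH.
Qed.

Lemma wp_decomp s n : wpath s [::] n -> forall r q, s = r ++ q ->
  exists n1 n2, n = n1 + n2 /\ wpath r [::] n1 /\ wpath q [::] n2.
Proof.
move E: [::] => e H; elim: H E => [s0|s0 a s1 t n0 H Hw IH] E r q Es.
  subst; case: r Es => [|? ?] //; case: q => // _.
  by exists 0, 0; split=> //; split; constructor.
case: r Es => [|A r0] Es.
  subst; exists 0, ((a != tau) + n0); split; first by rewrite add0n.
  split; first exact: wp_nil.
  exact: (wp_cons H Hw).
have Hne : A :: r0 <> [::] by [].
rewrite Es in H.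
have [r' [Hr Hs1]] := step_cat Hne H.
have [n1 [n2 [En [H1 H2]]]] := IH E _ _ Hs1.
exists ((a != tau) + n1), n2; split; first by rewrite En addnA.
by split=> //; exact: wp_cons Hr H1.
Qed.

Lemma wp0_treach s t : wpath s t 0 -> treach tau step s t.
Proof.
move E: 0 => e H; elim: H E => [s0|s0 a s1 t0 n0 H _ IH] E; first by constructor.
move: E; case: eqP => [Ea|] //=; subst => E.
by apply: tr_step H (IH E).
Qed.

Lemma treach_catr r r' s : treach tau step r r' -> treach tau step (r ++ s) (r' ++ s).
Proof.
elim=> [s0|s0 s1 t H _ IH]; first by constructor.
exact: tr_step (step_catr _ H) IH.
Qed.

Lemma tp_wp (C : seq V -> seq V -> Prop) x s t : tau_path tau step C x s t -> wpath s t 0.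
Proof.
elim=> [s0|s0 s1 t0 H _ _ IH]; first by constructor.
by have := wp_cons H IH; rewrite eqxx.
Qed.

Hypothesis hG : normed G.

Lemma normed_words w : exists n, wpath w [::] n.
Proof.
have crt : forall x y, clos_refl_trans _ (fun s t => exists a, step s a t) x y ->
  exists n, wpath x y n.
  move=> x y; elim=> [s t [a H]|s|s u t _ [n1 H1] _ [n2 H2]].
  - by exists ((a != tau) + 0); apply: wp_cons H (wp_nil _).
  - by exists 0; constructor.
  - by exists (n1 + n2); apply: wp_app H1 H2.
elim: w => [|X w [n IH]]; first by exists 0; constructor.
have [n1 H1] := crt _ _ (hG X).
exists (n1 + n); apply: wp_app _ IH.
by have := wp_catr w H1.
Qed.

Lemma tp_nil (C : seq V -> seq V -> Prop) x u : tau_path tau step C x [::] u -> u = [::].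
Proof.
move E: [::] => e H; case: H E => // t0 t1 u0 Ht _ _ E; subst.
case: (no_step_nil Ht).
Qed.

Lemma Z0 s n : bis s [::] -> wpath s [::] n -> wpath s [::] 0.
Proof.
move=> Hb H; move E: [::] Hb H => e Hb H; elim: H Hb E => [s0|s0 a s1 t n0 H _ IH] Hb E.
  constructor.
case: (bb_tr Hb H) => [[Ea Hb1]|[tk [t' [Hp [Ht _]]]]].
  by subst; have := wp_cons H (IH Hb1 erefl); rewrite eqxx.
by subst; move: Ht; rewrite (tp_nil Hp) => /no_step_nil.
Qed.

Lemma WN s t n : bis s t -> wpath t [::] n -> exists m, m <= n /\ wpath s [::] m.
Proof.
move=> Hb H; move E: [::] H Hb => e H; elim: H s E => [t0|t0 a t1 t2 n0 H _ IH] s E Hb.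
  subst; have [k Hk] := normed_words s.
  by exists 0; split=> //; apply: Z0 Hb Hk.
case: (bb_tr (bb_sym Hb) H) => [[Ea Hb1]|[tk [t' [Hp [Ht Hb1]]]]].
  have [m [Hm Hw]] := IH s E (bb_sym Hb1).
  by exists m; split=> //; apply: leq_trans Hm (leq_addl _ _).
have [m [Hm Hw]] := IH t' E (bb_sym Hb1).
exists (0 + ((a != tau) + m)); split; first by rewrite add0n leq_add2l.
exact: wp_app (tp_wp Hp) (wp_cons Ht Hw).
Qed.

Lemma wmin w : exists n0, wpath w [::] n0 /\ forall m, wpath w [::] m -> n0 <= m.
Proof.
have [n Hn] := normed_words w.
case: (classic (exists n0, wpath w [::] n0 /\ forall m, wpath w [::] m -> n0 <= m)) => // h.
exfalso.
have K : forall k m, wpath w [::] m -> k <= m.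
  elim=> // k IH m Hm; rewrite ltn_neqAle IH // andbT.
  by apply/eqP => E; apply: h; exists k; split; [rewrite E|].
by have := K n.+1 n Hn; rewrite ltnn.
Qed.

Lemma P2 d d' r : bis d d' -> bis (r ++ d) (r ++ d').
Proof.
move=> Hd.
pose B x y := exists r d d', x = r ++ d /\ y = r ++ d' /\ bis d d'.
apply: (@upto _ _ tau step B); last by exists r, d, d'.
  by move=> x y [r0 [d0 [d1 [-> [-> H]]]]]; exists r0, d1, d0; split=> //; split=> //; apply: bb_sym.
move=> x y [[|A r0] [d0 [d1 [-> [-> H]]]]].
  by apply: tr1_mono (bb_tr H) => ? ? ?; right.
move=> a x' Hx.
have Hne : A :: r0 <> [::] by [].
have [r' [Hr ->]] := step_cat Hne Hx.
right; exists ((A :: r0) ++ d1), (r' ++ d1); split; first by constructor.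
by split; [apply: step_catr|left; exists r', d0, d1].
Qed.

Variable gam : seq V.
Local Notation R := (R_of gam).

Lemma F0 al : in_star R al -> bis (al ++ gam) gam.
Proof.
elim: al => [|X al IH] H; first exact: bb_refl.
apply: (@bb_trans _ _ _ _ _ (X :: gam)).
  apply: (P2 [:: X]); apply: IH => Y HY; apply: (H); by rewrite in_cons HY orbT.
exact: (H X (mem_head _ _)).
Qed.

Lemma K X al : bis (X :: al ++ gam) gam -> bis (al ++ gam) gam.
Proof.
move=> Hb.
have [n0 [Hn0 Hmin]] := wmin gam.
have [m [Hm Hw]] := WN Hb Hn0.
have [m1 [m2 [E1 [W1 W2]]]] := wp_decomp Hw (r:=[:: X]) (q:=al ++ gam) erefl.
have [k1 [k2 [E2 [W3 W4]]]] := wp_decomp W2 erefl.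
have Hk2 := Hmin _ W4.
have Z1 : m1 = 0 by lia.
have Z2 : k1 = 0 by lia.
subst m1 k1.
apply: (stutter Hb).
  by have := treach_catr (al ++ gam) (wp0_treach W1).
by have := treach_catr gam (wp0_treach W3).
Qed.

Lemma L2 al : bis (al ++ gam) gam -> in_star R al.
Proof.
elim: al => [|X al IH] H; first exact: in_star_nil.
have H1 := K H.
have Hal := IH H1.
have HX : R X.
  apply: (@bb_trans _ _ _ _ _ (X :: al ++ gam)) H.
  exact: (P2 [:: X]) (bb_sym H1).
by move=> Y; rewrite in_cons => /orP [/eqP ->|/Hal].
Qed.


Local Notation stepR := (@bpa_step_R G R).
Local Notation bisR := (@bisim_R G R).

Definition Zd (d : seq V) := exists a, in_star R a /\ bisR a d.

Lemma tpR_nil (C : seq V -> seq V -> Prop) x a u :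
  in_star R a -> tau_path tau stepR C x a u -> u = a.
Proof.
move=> Ha H; case: H Ha => // t0 t1 u0 [Hn _] _ _ Ha; case: (Hn Ha).
Qed.

Lemma Zstep d b d' : Zd d -> stepR d b d' -> b = tau /\ Zd d'.
Proof.
move=> [a [Ha Hb]] Hs.
case: (bb_tr (bb_sym Hb) Hs) => [[E H]|[tk [t' [Hp [Ht _]]]]].
  by split=> //; exists a; split=> //; apply: bb_sym.
by move: Ht; rewrite (tpR_nil Ha Hp) => [[Hn _]]; case: (Hn Ha).
Qed.

Lemma L1 d : Zd d -> bis (d ++ gam) gam.
Proof.
pose B x y := (exists d, Zd d /\ x = d ++ gam /\ y = gam) \/
              (exists d, Zd d /\ x = gam /\ y = d ++ gam).
move=> Hd; apply: (@upto _ _ tau step B); last by left; exists d.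
  by move=> x y [[d0 [? [-> ->]]]|[d0 [? [-> ->]]]]; [right|left]; exists d0.
move=> x y [[d0 [Hd0 [-> ->]]]|[d0 [Hd0 [-> ->]]]].
  case: (classic (in_star R d0)) => Hs.
    by apply: tr1_mono (bb_tr (F0 Hs)) => ? ? ?; right.
  move=> a x' Hx.
  have [d' [Hd' ->]] := step_cat (not_star_nil Hs) Hx.
  have [Ea Zd'] := Zstep Hd0 (conj Hs Hd').
  by left; split=> //; left; left; exists d'.
move=> a g' Hg.
have [n Hn] := normed_words d0.
move: Hn; move E: [::] => e Hn.
elim: Hn E Hd0 => [s0|s0 b s1 t n0 Hst Hw IH] E Hd0.
  by subst; exact: (bb_tr_r _ (bb_sym (F0 (in_star_nil _))) Hg).
case: (classic (in_star R s0)) => Hs.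
  exact: (bb_tr_r _ (bb_sym (F0 Hs)) Hg).
have [Eb Z1] := Zstep Hd0 (conj Hs Hst); subst b.
case: (IH E Z1) => [[Ea HC]|[tk [t' [Hp [Ht HC]]]]].
  subst a; right; exists (s0 ++ gam), (s1 ++ gam); split; first by constructor.
  by split=> //; apply: step_catr.
right; exists tk, t'; split=> //.
apply: tau_path_cons Hp; first exact: step_catr.
by left; right; exists s1.
Qed.

Lemma dir1 al be : bisR al be -> bis (al ++ gam) (be ++ gam).
Proof.
pose B x y := exists a b, bisR a b /\ x = a ++ gam /\ y = b ++ gam.
move=> H; apply: (@upto _ _ tau step B); last by exists al, be.
  by move=> x y [a [b [Hab [-> ->]]]]; exists b, a; split=> //; apply: bb_sym.
move=> x y [a [b [Hab [-> ->]]]].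
case: (classic (in_star R a)) => Ha.
  have Hb := L1 (ex_intro _ a (conj Ha Hab)).
  apply: tr1_mono (bb_tr (bb_trans (F0 Ha) (bb_sym Hb))) => ? ? ?; by right.
move=> c x' Hx.
have [a' [Ha' ->]] := step_cat (not_star_nil Ha) Hx.
case: (bb_tr Hab (conj Ha Ha')) => [[E H1]|[bk [b' [Hp [Hbk H1]]]]].
  by left; split=> //; left; exists a', b.
right; exists (bk ++ gam), (b' ++ gam); split.
  apply: (tp_map (f := fun w => w ++ gam) _ _ Hp).
    by move=> ? ? [_ ?]; apply: step_catr.
  by move=> w Hw; left; exists a, w.
split; first by case: Hbk => _ ?; apply: step_catr.
by left; exists a', b'.
Qed.

Lemma dir2 al be : bis (al ++ gam) (be ++ gam) -> bisR al be.
Proof.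
pose B x y := bis (x ++ gam) (y ++ gam).
move=> H; apply: (@upto _ _ tau stepR B) => //.
  by move=> x y; apply: bb_sym.
move=> a b Hab c a' [Ha Ha'].
case: (bb_tr Hab (step_catr gam Ha')) => [[E H1]|[tk [t' [Hp [Ht H1]]]]].
  by left; split=> //; left.
have Hno : forall d, in_star R d -> ~ bis (a ++ gam) (d ++ gam).
  by move=> d Hd Hb; apply: Ha; apply: L2; apply: bb_trans Hb (F0 Hd).
have pull : forall t u, tau_path tau step bis (a ++ gam) t u -> forall b0, t = b0 ++ gam ->
    bis (a ++ gam) (b0 ++ gam) ->
    exists bk, u = bk ++ gam /\ tau_path tau stepR (fun x y => B x y \/ bisR x y) a b0 bk
      /\ ~ in_star R bk.
  move=> t u; elim=> [t0 b0 -> Hb|t0 t1 u0 Hst Hc Hp0 IH b0 E Hb].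
    by exists b0; split=> //; split; [constructor|move=> Hs; apply: (Hno _ Hs)].
  have Hs : ~ in_star R b0 by move=> Hs; apply: (Hno _ Hs).
  rewrite E in Hst.
  have [b1 [Hb1 E1]] := step_cat (not_star_nil Hs) Hst.
  have Hc' : bis (a ++ gam) (b1 ++ gam) by rewrite -E1.
  have [bk [Ebk [Hpk Hnk]]] := IH b1 E1 Hc'.
  exists bk; split=> //; split=> //.
  by apply: tau_path_cons Hpk; [split|left; rewrite /B -E1].
have [bk [Etk [Hpk Hnk]]] := pull _ _ Hp b erefl Hab.
rewrite Etk in Ht.
have [b' [Hb' E']] := step_cat (not_star_nil Hnk) Ht.
right; exists bk, b'; split=> //; split; first by split.
by left; rewrite /B -E'.
Qed.

End BPAsec.

Theorem proposition4p6 (G : BPA) (hG : normed G) (alpha beta gamma : seq (bpa_V G)) :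
  bisim (alpha ++ gamma) (beta ++ gamma) <-> bisim_R (R_of gamma) alpha beta.
Proof.
split; [exact: dir2 | exact: dir1].
Qed.
Print Assumptions proposition4p6.
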